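(* In the setting of ONES (step $\theta>0$, $\widetilde w_1\in\triangle^n$ with positive entries, arbitrary $\ell_t,\widehat\ell_t\in\mathbb R^{n+1}$, updates $\widetilde w_{t+1}=\mathscr N(\widetilde w_t\circ e^{-\theta\ell_t})$, $w_{t+1}=\mathscr N(\widetilde w_{t+1}\circ e^{-\theta\widehat\ell_{t+1}})$), for every $T\ge1$ and every $w\in\triangle^n$, $$\sum_{t=1}^T\langle \ell_t,w_t-w\rangle\le \frac1\theta\sum_i w(i)\ln\frac{w(i)}{\widetilde w_1(i)}+\frac\theta2\sum_{t=1}^T h_{\|\ell_t\|_\infty}\big(\|\ell_t-\widehat\ell_t\|_\infty\big),$$ where $h_\sigma(\delta)=\delta^2-(|\delta|-|\sigma|)_+^2$.
   Context: $\triangle^n=\{w\in\mathbb R_+^{n+1}:\|w\|_1=1\}$; $\circ$ is the Hadamard product; $\mathscr N(u)=u/\|u\|_1$; $w_1=\mathscr N(\widetilde w_1\circ e^{-\theta\widehat\ell_1})$; $(a)_+=\max\{a,0\}$; $0\ln0=0$. *)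

(* Defs.v *)
From HB Require Import structures.
From mathcomp Require Import all_boot all_order all_algebra.
From mathcomp Require Import all_classical all_reals all_analysis.
Set Implicit Arguments. Unset Strict Implicit. Unset Printing Implicit Defensive.
Import Order.TTheory GRing.Theory Num.Theory.
Local Open Scope ring_scope.

Section ONES.
Variables (R : realType) (n : nat).

Definition vec := 'I_n.+1 -> R.

Definition in_simplex (w : vec) : Prop :=
  (forall i, 0 <= w i) /\ \sum_i w i = 1.

(* N(u) = u / ||u||_1 (applied only to positive vectors) *)
Definition normalize (u : vec) : vec := fun i => u i / \sum_j `|u j|.

Definition expmul (theta : R) (u l : vec) : vec := fun i => u i * expR (- theta * l i).

Definition inner (u v : vec) : R := \sum_i u i * v i.

Definition linf (u : vec) : R := \big[Num.max/0]_i `|u i|.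

Definition hfun (sigma delta : R) : R :=
  delta ^+ 2 - (Num.max (`|delta| - `|sigma|) 0) ^+ 2.

Definition KL (w v : vec) : R :=
  \sum_i (if w i == 0 then 0 else w i * ln (w i / v i)).

(* wtil_aux k = \widetilde w_{k+1}; losses ell t indexed from t = 1 *)
Fixpoint wtil_aux (theta : R) (wt1 : vec) (ell : nat -> vec) (k : nat) : vec :=
  match k with
  | 0 => wt1
  | k'.+1 => normalize (expmul theta (wtil_aux theta wt1 ell k') (ell k))
  end.

Definition wtil theta wt1 ell (t : nat) : vec := wtil_aux theta wt1 ell t.-1.

Definition wpred theta wt1 ell (ellhat : nat -> vec) (t : nat) : vec :=
  normalize (expmul theta (wtil theta wt1 ell t) (ellhat t)).

End ONES.

(* Main.v *)
Require Import Defs.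
From HB Require Import structures.
From mathcomp Require Import all_boot all_order all_algebra.
From mathcomp Require Import all_classical all_reals all_analysis.
From mathcomp Require Import ring lra.
Import Order.TTheory GRing.Theory Num.Theory.
Import numFieldNormedType.Exports.
Local Open Scope classical_set_scope.
Local Open Scope ring_scope.

Section Calc.
Variable R : realType.

Lemma mono_deriv (f df : R -> R) (a b : R) : a <= b ->
  (forall x : R, is_derive x (1:R) f (df x)) -> (forall x, a < x -> x < b -> 0 <= df x) ->
  f a <= f b.
Proof.
move=> ab fd dpos; case: (ltgtP a b) ab => // [altb|->] _; last by [].
have [ |c cab E] := MVT altb (fun x _ => fd x).
  apply/continuous_subspaceT => x.
  apply/differentiable_continuous/derivable1_diffP; by have [] := fd x.
rewrite -subr_ge0 E; apply: mulr_ge0; last by rewrite subr_ge0 ltW.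
by apply: dpos; rewrite (itvP cab).
Qed.

Variable a : R.
Definition S (x : R) := (1 + a) * expR x + (1 - a) * expR (- x).
Definition S1 (x : R) := (1 + a) * expR x - (1 - a) * expR (- x).

Lemma is_derive_expN (x : R) : is_derive x (1:R) (fun y : R => expR (- y)) (- expR (- x)).
Proof.
have -> : (fun y : R => expR (- y)) = expR \o (fun y => - y) by [].
have H := (is_derive1_comp (f:=expR) (g:=fun y : R => - y) (x:=x) (is_derive_expR _) (is_deriveNid x 1)).
apply: (is_derive_eq H); by rewrite mulrN1.
Qed.

Lemma is_derive_S (x : R) : is_derive x (1:R) S (S1 x).
Proof.
have -> : S = ((1+a) *: (expR : R -> R)) + ((1-a) *: (fun y : R => expR (-y))).
  by apply/funext => y.
have H := is_derive_expN x.
have H2 := is_deriveD (is_deriveZ (1+a) (is_derive_expR x)) (is_deriveZ (1-a) H).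
apply: (is_derive_eq H2).
by rewrite /S1 /GRing.scale /= mulrN.
Qed.

Lemma is_derive_S1 (x : R) : is_derive x (1:R) S1 (S x).
Proof.
have -> : S1 = ((1+a) *: (expR : R -> R)) - ((1-a) *: (fun y : R => expR (-y))).
  by apply/funext => y.
have H := is_derive_expN x.
have H2 := is_deriveB (is_deriveZ (1+a) (is_derive_expR x)) (is_deriveZ (1-a) H).
apply: (is_derive_eq H2).
by rewrite /S /GRing.scale /= mulrN opprK.
Qed.

Hypothesis a1 : -1 <= a <= 1.

Lemma S_gt0 x : 0 < S x.
Proof.
rewrite /S; case/andP: a1 => h1 h2.
have e1 := expR_gt0 x; have e2 := expR_gt0 (-x).
have p1 : 0 <= (1 + a) * expR x by apply: mulr_ge0; lra.
have p2 : 0 <= (1 - a) * expR (- x) by apply: mulr_ge0; lra.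
have [ha|ha] := leP 0 a.
  have : 0 < (1 + a) * expR x by apply: mulr_gt0; lra.
  lra.
have : 0 < (1 - a) * expR (-x) by apply: mulr_gt0; lra.
lra.
Qed.

Definition kf (x : R) := a + x - S1 x * (S x)^-1.

Lemma is_derive_kf (x : R) : is_derive x (1:R) kf ((S1 x / S x) ^+ 2).
Proof.
have -> : kf = (cst a + id) - (S1 * (fun y => (S y)^-1)).
  by apply/funext => y.
have HV := is_deriveV (lt0r_neq0 (S_gt0 x)) (is_derive_S x).
have HM := is_deriveM (is_derive_S1 x) HV.
have H1 := is_deriveD (is_derive_cst a x 1) (is_derive_id x (1:R)).
have H := is_deriveB H1 HM.
apply: (is_derive_eq H).
have := S_gt0 x; move: (S x) (S1 x) => s s1 sp.
rewrite /GRing.scale /=.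
field; lra.
Qed.

Lemma kf_ge0 x : 0 <= x -> 0 <= kf x.
Proof.
move=> x0.
have k0 : kf 0 = 0.
  rewrite /kf /S /S1 oppr0 expR0 !mulr1.
  field; lra.
rewrite -k0.
apply: (mono_deriv _ _ _ _ x0 is_derive_kf) => y _ _.
exact: sqr_ge0.
Qed.

Definition Rf (x : R) := S x * expR (- (a * x + x ^+ 2 / 2)).

Lemma is_derive_Rf (x : R) :
  is_derive x (1:R) Rf (- (S x * kf x * expR (- (a * x + x ^+ 2 / 2)))).
Proof.
set g := fun y : R => - (a * y + y ^+ 2 / 2).
have Hg : is_derive x (1:R) g (- (a + x)).
  have -> : g = - ((a *: id) + (2^-1 *: (id ^+ 2))).
    by apply/funext => y; rewrite /g /= !fctE /= /GRing.scale /= [_ / 2]mulrC.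
  have H := is_deriveN (is_deriveD (is_deriveZ a (is_derive_id x (1:R)))
     (is_deriveZ 2^-1 (is_deriveX 2 (is_derive_id x (1:R))))).
  apply: (is_derive_eq H).
  by rewrite /GRing.scale /=; field.
have He := is_derive1_comp (f := expR) (g := g) (is_derive_expR (g x)) Hg.
have -> : Rf = S * (expR \o g) by apply/funext.
have HM := is_deriveM (is_derive_S x) He.
apply: (is_derive_eq HM).
rewrite /kf /GRing.scale /= /g.
have := S_gt0 x; move: (S x) (S1 x) => s s1 sp.
field; lra.
Qed.

Lemma Rf_le x : 0 <= x -> Rf x <= 2.
Proof.
move=> x0.
have -> : 2 = Rf 0.
  rewrite /Rf /S expr2 !mulr0 mul0r add0r oppr0 expR0 !mulr1; lra.
rewrite -(opprK (Rf x)) -(opprK (Rf 0)) lerN2.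
apply: (mono_deriv (fun y => - Rf y) _ _ _ x0 (fun y => is_deriveN (is_derive_Rf y))).
move=> y y0 _; rewrite opprK; apply: mulr_ge0; last exact: expR_ge0.
apply: mulr_ge0; [exact: ltW (S_gt0 y) | exact: kf_ge0 (ltW y0)].
Qed.

End Calc.

Section Hoeff.
Variable R : realType.

Lemma hoeff1 (a c : R) : -1 <= a <= 1 -> 0 <= c ->
  (1 + a) * expR c + (1 - a) * expR (- c) <= 2 * expR (a * c + c ^+ 2 / 2).
Proof.
move=> a1 c0; have := @Rf_le R a a1 c c0; rewrite /Rf /S.
set E := expR (- (a * c + _)) => H.
have EE : expR (a * c + c ^+ 2 / 2) = E^-1 by rewrite /E expRN invrK.
have Ep : 0 < E by exact: expR_gt0.
rewrite EE -(ler_pM2r Ep) -mulrA mulVf ?mulr1 //; exact: lt0r_neq0.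
Qed.

Lemma chord (c z : R) : 0 < c -> -c <= z <= c ->
  expR z <= ((c + z) * expR c + (c - z) * expR (- c)) / (2 * c).
Proof.
move=> c0 /andP[h1 h2].
have t0 : 0 <= (c + z) / (2 * c) by apply: divr_ge0; lra.
have t1 : (c + z) / (2 * c) <= 1 by rewrite ler_pdivrMr; lra.
have := convex_expR (Itv01 t0 t1) c (- c).
rewrite !convRE /= /unstable.onem.
have -> : (c + z) / (2 * c) * c + (1 - (c + z) / (2 * c)) * - c = z.
  field; lra.
move=> H; apply: (le_trans H); rewrite le_eqVlt; apply/orP; left; apply/eqP; field; lra.
Qed.

End Hoeff.

Section Disc.
Context {R : realType} {I : finType}.
Implicit Types (p q f g : I -> R).

Definition Ex p f := \sum_i p i * f i.
Definition Zf p f := \sum_i p i * expR (f i).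
Definition tilt p f : I -> R := fun i => p i * expR (f i) / Zf p f.
Definition KLd q p := \sum_i q i * ln (q i / p i).
Definition pos p := forall i, 0 < p i.
Definition sum1 p := \sum_i p i = 1.

Lemma Zf_gt0 p f : pos p -> sum1 p -> 0 < Zf p f.
Proof.
move=> pp s1; rewrite /Zf.
case: (pickP (@predT I)) => [i0 _|h].
  rewrite (bigD1 i0) //=; apply: ltr_pwDl; first by apply: mulr_gt0 => //; exact: expR_gt0.
  by apply: sumr_ge0 => i _; apply: mulr_ge0; [exact: ltW | exact: expR_ge0].
by move: s1; rewrite /sum1 big_pred0 // => /eqP; rewrite eq_sym oner_eq0.
Qed.

Lemma tilt_pos p f : pos p -> sum1 p -> pos (tilt p f).
Proof.
move=> pp s1 i; rewrite /tilt; apply: divr_gt0; last exact: Zf_gt0.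
by apply: mulr_gt0 => //; exact: expR_gt0.
Qed.

Lemma tilt_sum1 p f : pos p -> sum1 p -> sum1 (tilt p f).
Proof.
move=> pp s1; rewrite /sum1 /tilt -mulr_suml mulfV //.
exact: lt0r_neq0 (Zf_gt0 p f pp s1).
Qed.

Lemma Zf0 p : sum1 p -> Zf p (fun _ => 0) = 1.
Proof. by move=> s1; rewrite /Zf -[RHS]s1; apply: eq_bigr => i _; rewrite expR0 mulr1. Qed.

Lemma Zf_tilt p f g : pos p -> sum1 p ->
  Zf (tilt p f) g = Zf p (fun i => f i + g i) / Zf p f.
Proof.
move=> pp s1; have Z0 := Zf_gt0 p f pp s1.
rewrite /tilt; move: Z0; set Z := Zf p f => Z0.
rewrite /Zf mulr_suml; apply: eq_bigr => i _.
by rewrite expRD; field; apply: lt0r_neq0.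
Qed.

Lemma tilt_tilt p f g : pos p -> sum1 p ->
  tilt (tilt p f) g = tilt p (fun i => f i + g i).
Proof.
move=> pp s1; apply/funext => i; rewrite {1}/tilt Zf_tilt // /tilt expRD.
have h1 := Zf_gt0 p f pp s1; have h2 := Zf_gt0 p (fun i => f i + g i) pp s1.
by field; rewrite !lt0r_neq0.
Qed.

Lemma ln_le_sub1 (x : R) : 0 < x -> ln x <= x - 1.
Proof.
move=> x0; have := @le_ln1Dx R (x - 1); rewrite addrCA subrr addr0; apply; lra.
Qed.

Lemma gibbs p q f : pos p -> sum1 p -> pos q -> sum1 q ->
  Ex q f - KLd q p <= ln (Zf p f).
Proof.
move=> pp s1 qp s1q.
have Z0 := Zf_gt0 p f pp s1.
rewrite -subr_ge0.
have E : ln (Zf p f) - (Ex q f - KLd q p) =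
   - \sum_i q i * ln (p i * expR (f i) / (q i * Zf p f)).
  rewrite /Ex /KLd -sumrB -[ln (Zf p f)]mul1r -{1}s1q mulr_suml -sumrB -sumrN.
  apply: eq_bigr => i _.
  have hp := pp i; have hq := qp i.
  rewrite !ln_div ?lnM ?expRK ?posrE //.
  - ring.
  - exact: expR_gt0.
  - by apply: mulr_gt0 => //; exact: expR_gt0.
  - exact: mulr_gt0.
rewrite E oppr_ge0.
apply: (le_trans (y := \sum_i q i * (p i * expR (f i) / (q i * Zf p f) - 1))).
  apply: ler_sum => i _; apply: ler_wpM2l; first exact: ltW.
  apply: ln_le_sub1; apply: divr_gt0; first by apply: mulr_gt0 => //; exact: expR_gt0.
  exact: mulr_gt0.
rewrite (eq_bigr (fun i => p i * expR (f i) / Zf p f - q i)); last first.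
  move=> i _; have := qp i => qi; by field; rewrite !lt0r_neq0.
by rewrite sumrB -mulr_suml s1q mulfV ?subrr // lt0r_neq0.
Qed.

Lemma Ex_affine p f (al be : R) : sum1 p ->
  \sum_i p i * (al + be * f i) = al + be * Ex p f.
Proof.
move=> s1; rewrite /Ex mulr_sumr -[al in RHS]mulr1 -s1 mulr_sumr -big_split /=.
by apply: eq_bigr => i _; ring.
Qed.

Lemma Ex_abs p f c : (forall i, 0 <= p i) -> sum1 p -> (forall i, `|f i| <= c) ->
  `|Ex p f| <= c.
Proof.
move=> p0 s1 fc; rewrite /Ex.
apply: (le_trans (ler_norm_sum _ _ _)).
rewrite -[c]mul1r -s1 mulr_suml; apply: ler_sum => i _.
by rewrite normrM ger0_norm // ler_wpM2l.
Qed.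

Lemma HL p f (c : R) : (forall i, 0 <= p i) -> sum1 p -> 0 <= c ->
  (forall i, `|f i| <= c) -> Zf p f <= expR (Ex p f + c ^+ 2 / 2).
Proof.
move=> p0 s1 c0 fc.
have mc := Ex_abs p f c p0 s1 fc.
case: (ltgtP c 0) c0 => // [cp|ce] _; last first.
  have f0 i : f i = 0 by apply/eqP; rewrite -normr_le0 -ce fc.
  rewrite /Zf /Ex ce expr2 mul0r mul0r addr0.
  under eq_bigr => i _ do rewrite f0 expR0 mulr1.
  under [X in _ <= expR X]eq_bigr => i _ do rewrite f0 mulr0.
  rewrite [in X in _ <= X]big1 // expR0.
  by have -> : \sum_i p i = 1 by exact: s1.
apply: (le_trans (y := \sum_i p i * ((c * expR c + c * expR (- c)) / (2 * c)
     + ((expR c - expR (- c)) / (2 * c)) * f i))).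
  apply: ler_sum => i _; apply: ler_wpM2l => //.
  have := fc i; rewrite ler_norml => hf.
  apply: (le_trans (@chord R _ _ cp hf)).
  by rewrite le_eqVlt; apply/orP; left; apply/eqP; field; lra.
rewrite Ex_affine //.
move: mc; rewrite ler_norml; move: (Ex p f) => m /andP [m1 m2].
have a1 : -1 <= m / c <= 1.
  by apply/andP; split; [rewrite ler_pdivlMr // mulN1r | rewrite ler_pdivrMr // mul1r].
have H := @hoeff1 R _ _ a1 (ltW cp).
move: H; have -> : m / c * c = m by field; lra.
move=> H.
have E : (c * expR c + c * expR (- c)) / (2 * c) + (expR c - expR (- c)) / (2 * c) * m
  = ((1 + m / c) * expR c + (1 - m / c) * expR (- c)) / 2 by field; lra.
rewrite E; lra.
Qed.

Lemma KL_tilt p f : pos p -> sum1 p ->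
  KLd (tilt p f) p = Ex (tilt p f) f - ln (Zf p f).
Proof.
move=> pp s1; have Z0 := Zf_gt0 p f pp s1.
have s1q := tilt_sum1 p f pp s1.
rewrite /KLd /Ex -[ln (Zf p f)]mul1r -{1}s1q mulr_suml -sumrB.
apply: eq_bigr => i _.
have hp := pp i.
have -> : tilt p f i / p i = expR (f i) / Zf p f.
  by rewrite /tilt; field; rewrite !lt0r_neq0.
rewrite ln_div ?posrE ?expRK //; last exact: expR_gt0.
ring.
Qed.

Lemma ln_le_of (x y : R) : 0 < x -> x <= y -> ln x <= ln y.
Proof.
move=> x0 xy; rewrite ler_ln // posrE; exact: lt_le_trans xy.
Qed.

Lemma KL_tilt_le p f (c : R) : pos p -> sum1 p -> 0 <= c ->
  (forall i, `|f i| <= c) -> KLd (tilt p f) p <= c ^+ 2 / 2.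
Proof.
move=> pp s1 c0 fc.
have Z0 := Zf_gt0 p f pp s1.
have qp := tilt_pos p f pp s1; have s1q := tilt_sum1 p f pp s1.
have H := HL (tilt p f) (fun i => - f i) c (fun i => ltW (qp i)) s1q c0
  (fun i => ltac:(by rewrite normrN; exact: fc)).
rewrite Zf_tilt // in H.
have E1 : Zf p (fun i => f i + - f i) = 1.
  by rewrite -(Zf0 p s1); apply: eq_bigr => i _; rewrite subrr.
rewrite E1 in H.
have E2 : Ex (tilt p f) (fun i => - f i) = - Ex (tilt p f) f.
  by rewrite /Ex -sumrN; apply: eq_bigr => i _; rewrite mulrN.
rewrite E2 in H.
have := ln_le_of _ _ (divr_gt0 ltr01 Z0) H.
rewrite expRK ln_div ?posrE // ln1 KL_tilt //; lra.
Qed.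

Lemma Tlem p g f (c : R) : pos p -> sum1 p -> 0 <= c ->
  (forall i, `|g i| <= c) -> Ex (tilt p g) f <= ln (Zf p f) + c ^+ 2 / 2.
Proof.
move=> pp s1 c0 gc.
have := gibbs p (tilt p g) f pp s1 (tilt_pos p g pp s1) (tilt_sum1 p g pp s1).
have := KL_tilt_le p g c pp s1 c0 gc.
lra.
Qed.

Lemma Ex_scale q f (l : R) : Ex q (fun i => l * f i) = l * Ex q f.
Proof. by rewrite /Ex mulr_sumr; apply: eq_bigr => i _; ring. Qed.

End Disc.

Section Step.
Context {R : realType} {I : finType}.
Implicit Types (p q f g : I -> R).

Lemma ln_Zf_le p f (c : R) : (forall i, 0 <= p i) -> sum1 p -> 0 <= c ->
  (forall i, `|f i| <= c) -> pos p ->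
  ln (Zf p f) <= Ex p f + c ^+ 2 / 2.
Proof.
move=> p0 s1 c0 fc pp.
have := ln_le_of _ _ (Zf_gt0 p f pp s1) (HL p f c p0 s1 c0 fc).
by rewrite expRK.
Qed.

Lemma step p X Y (sg dl : R) : pos p -> sum1 p -> 0 <= sg -> 0 <= dl ->
  (forall i, `|X i| <= sg) -> (forall i, `|X i - Y i| <= dl) ->
  Ex (tilt p (fun i => - Y i)) X + ln (Zf p (fun i => - X i))
    <= (dl ^+ 2 - (Num.max (dl - sg) 0) ^+ 2) / 2.
Proof.
move=> pp s1 sg0 dl0 Xs Xd.
set mu := tilt p (fun i => - X i).
have mup : pos mu := tilt_pos p _ pp s1.
have mus : sum1 mu := tilt_sum1 p _ pp s1.
set d := fun i => X i - Y i.
have hq : tilt p (fun i => - Y i) = tilt mu d.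
  rewrite /mu tilt_tilt //; congr tilt; apply/funext => i; rewrite /d; ring.
have Zp := Zf_gt0 p (fun i => - X i) pp s1.
have hZ : ln (Zf p (fun i => - X i)) = - ln (Zf mu X).
  rewrite /mu Zf_tilt //.
  have -> : Zf p (fun i => - X i + X i) = 1.
    by rewrite -(Zf0 p s1); apply: eq_bigr => i _; rewrite addNr.
  by rewrite ln_div ?posrE // ln1 sub0r opprK.
rewrite hq hZ.
have [dls|sgdl] := leP dl sg.
  have -> : Num.max (dl - sg) 0 = 0 by apply/max_idPr; lra.
  have := Tlem mu d X dl mup mus dl0 Xd.
  rewrite [0 ^+ 2]expr2 mul0r subr0; lra.
have -> : Num.max (dl - sg) 0 = dl - sg by apply/max_idPl; lra.
have [sge|sgp] := eqVneq sg 0.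
  have X0 i : X i = 0 by apply/eqP; rewrite -normr_le0 -sge Xs.
  have -> : Zf mu X = 1.
    by rewrite -(Zf0 mu mus); apply: eq_bigr => i _; rewrite X0.
  have -> : Ex (tilt mu d) X = 0.
    by rewrite /Ex big1 // => i _; rewrite X0 mulr0.
  by rewrite ln1 sge !subr0 subrr mul0r.
have sgp' : 0 < sg by rewrite lt_def sgp sg0.
have dlp : 0 < dl by lra.
set s := sg / dl.
set r := (dl - sg) / dl.
set la := (dl - sg) / sg.
have s0 : 0 <= s by apply: divr_ge0; lra.
have r0 : 0 <= r by apply: divr_ge0; lra.
have la0 : 0 < la by apply: divr_gt0; lra.
set nu := tilt mu (fun i => s * d i).
have nup : pos nu := tilt_pos mu _ mup mus.
have nus : sum1 nu := tilt_sum1 mu _ mup mus.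
have hq2 : tilt mu d = tilt nu (fun i => r * d i).
  rewrite /nu tilt_tilt //; congr tilt; apply/funext => i.
  rewrite /s /r; field; lra.
have sd i : `|s * d i| <= s * dl.
  by rewrite normrM ger0_norm //; apply: ler_wpM2l => //; exact: Xd.
have rd i : `|r * d i| <= r * dl.
  by rewrite normrM ger0_norm //; apply: ler_wpM2l => //; exact: Xd.
have lX i : `|la * X i| <= la * sg.
  by rewrite normrM ger0_norm ?(ltW la0) //; apply: ler_wpM2l; [exact: ltW | exact: Xs].
have H1 := Tlem mu (fun i => s * d i) X (s * dl) mup mus (mulr_ge0 s0 dl0) sd.
have H2 := Tlem nu (fun i => r * d i) (fun i => la * X i) (r * dl) nup nus
  (mulr_ge0 r0 dl0) rd.
have H3 := ln_Zf_le nu (fun i => la * X i) (la * sg) (fun i => ltW (nup i)) nus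
  (mulr_ge0 (ltW la0) sg0) lX nup.
rewrite -hq2 !Ex_scale in H2; rewrite Ex_scale in H3.
move: H1 H2 H3.
move: (Ex (tilt mu d) X) (Ex nu X) (ln (Zf mu X)) (ln (Zf nu (fun i => la * X i))) => A B L M H1 H2 H3.
rewrite -(ler_pM2l la0).
have K : la * ((dl ^+ 2 - (dl - sg) ^+ 2) / 2) =
  la * ((s * dl) ^+ 2 / 2) + (la * sg) ^+ 2 / 2 + (r * dl) ^+ 2 / 2.
  rewrite /la /s /r; field; lra.
rewrite K.
have : la * B <= la * (L + (s * dl) ^+ 2 / 2) by rewrite ler_pM2l.
lra.
Qed.

End Step.

Section Main.
Context {R : realType} {n : nat}.
Local Notation I := ('I_n.+1).
Implicit Types (p q f g w : I -> R).

Lemma normalize_tilt (theta : R) p l : pos p -> sum1 p ->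
  normalize (expmul theta p l) = tilt p (fun i => - theta * l i).
Proof.
move=> pp s1; apply/funext => i; rewrite /normalize /tilt /expmul /Zf.
congr (_ / _); apply: eq_bigr => j _; rewrite ger0_norm //.
by apply: mulr_ge0; [exact: ltW | exact: expR_ge0].
Qed.

Lemma wtil_aux_ok (theta : R) wt1 (ell : nat -> I -> R) k :
  pos wt1 -> sum1 wt1 ->
  pos (wtil_aux theta wt1 ell k) /\ sum1 (wtil_aux theta wt1 ell k).
Proof.
move=> pp s1; elim: k => [|k [hp hs]] //=.
rewrite normalize_tilt //; split; [exact: tilt_pos | exact: tilt_sum1].
Qed.

Lemma linf_ge (u : I -> R) i : `|u i| <= linf u.
Proof. rewrite /linf; exact: le_bigmax. Qed.

Lemma linf_ge0 (u : I -> R) : 0 <= linf u.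
Proof. exact: le_trans (normr_ge0 (u ord0)) (linf_ge u ord0). Qed.

Lemma KL_tiltE w p f : in_simplex w -> pos p -> sum1 p ->
  KL w (tilt p f) = KL w p - Ex w f + ln (Zf p f).
Proof.
move=> [w0 ws] pp s1.
have Z0 := Zf_gt0 p f pp s1.
have -> : KL w (tilt p f) = KL w p + \sum_i w i * (ln (Zf p f) + (-1) * f i).
  rewrite /KL -big_split /=; apply: eq_bigr => i _.
  have hp := pp i.
  case: (eqVneq (w i) 0) => [->|wn0]; first by rewrite mul0r addr0.
  have wp : 0 < w i by rewrite lt_def wn0 w0.
  rewrite /tilt.
  have -> : w i / (p i * expR (f i) / Zf p f) = (w i / p i) * (Zf p f / expR (f i)).
    by field; rewrite !lt0r_neq0 ?expR_gt0.
  rewrite lnM ?ln_div ?posrE ?expRK ?divr_gt0 ?expR_gt0 //.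
  ring.
rewrite Ex_affine //; ring.
Qed.

Lemma KL_ge0 w p : in_simplex w -> pos p -> sum1 p -> 0 <= KL w p.
Proof.
move=> [w0 ws] pp s1.
apply: (le_trans (y := \sum_i (w i - p i))).
  by rewrite sumrB ws s1 subrr.
apply: ler_sum => i _.
have hp := pp i.
case: (eqVneq (w i) 0) => [->|wn0]; first by rewrite sub0r oppr_le0 ltW.
have wp : 0 < w i by rewrite lt_def wn0 w0.
have := ln_le_sub1 _ (divr_gt0 hp wp).
rewrite ln_div ?posrE // => H.
have E : w i - p i = w i * (1 - p i / w i) by field; rewrite lt0r_neq0.
rewrite E; apply: ler_wpM2l; [exact: ltW | idtac]. rewrite ln_div ?posrE // in H; lra.
Qed.

Lemma inner_sub l q w :
  inner l (fun i => q i - w i) = Ex q l - Ex w l.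
Proof. by rewrite /inner /Ex -sumrB; apply: eq_bigr => i _; ring. Qed.

Lemma hfun_scale (theta s d : R) : 0 < theta -> 0 <= s -> 0 <= d ->
  ((theta * d) ^+ 2 - (Num.max (theta * d - theta * s) 0) ^+ 2) / 2
  = theta ^+ 2 / 2 * hfun s d.
Proof.
move=> th s0 d0; rewrite /hfun !ger0_norm //.
have [ds|sd] := leP d s.
  have -> : Num.max (theta * d - theta * s) 0 = 0.
    apply/max_idPr; rewrite -mulrBr; apply: mulr_ge0_le0; [exact: ltW | lra].
  have -> : Num.max (d - s) 0 = 0 by apply/max_idPr; lra.
  ring.
have -> : Num.max (theta * d - theta * s) 0 = theta * (d - s).
  rewrite -mulrBr; apply/max_idPl; apply: mulr_ge0; [exact: ltW | lra].
have -> : Num.max (d - s) 0 = d - s by apply/max_idPl; lra.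
ring.
Qed.

Lemma step2 (theta : R) p l lh w : 0 < theta -> pos p -> sum1 p -> in_simplex w ->
  theta * inner l (fun i => normalize (expmul theta p lh) i - w i)
  <= KL w p - KL w (normalize (expmul theta p l))
     + theta ^+ 2 / 2 * hfun (linf l) (linf (fun i => l i - lh i)).
Proof.
move=> th pp s1 hw.
rewrite !normalize_tilt // KL_tiltE // inner_sub Ex_scale.
have H := step p (fun i => theta * l i) (fun i => theta * lh i)
  (theta * linf l) (theta * linf (fun i => l i - lh i)) pp s1
  (mulr_ge0 (ltW th) (linf_ge0 _)) (mulr_ge0 (ltW th) (linf_ge0 _))
  (fun i => ltac:(by rewrite normrM gtr0_norm //; apply: ler_wpM2l; [exact: ltW|exact: linf_ge]))
  (fun i => ltac:(by rewrite -mulrBr normrM gtr0_norm //; apply: ler_wpM2l;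
                    [exact: ltW|exact: (linf_ge (fun i => l i - lh i))])).
rewrite hfun_scale // ?linf_ge0 // in H.
have -> : (fun i => - theta * lh i) = (fun i => - (theta * lh i)).
  by apply/funext => i; rewrite mulNr.
have -> : (fun i => - theta * l i) = (fun i => - (theta * l i)).
  by apply/funext => i; rewrite mulNr.
rewrite Ex_scale in H.
lra.
Qed.

End Main.

Local Close Scope classical_set_scope.

Theorem corollary3 (R : realType) (n : nat) (theta : R) (wt1 : 'I_n.+1 -> R)
    (ell ellhat : nat -> 'I_n.+1 -> R) :
  0 < theta ->
  in_simplex wt1 -> (forall i, 0 < wt1 i) ->
  forall (T : nat) (w : 'I_n.+1 -> R), (1 <= T)%N -> in_simplex w ->
  \sum_(1 <= t < T.+1)
     inner (ell t) (fun i => wpred theta wt1 ell ellhat t i - w i)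
  <= theta^-1 * KL w wt1
     + theta / 2 * \sum_(1 <= t < T.+1) hfun (linf (ell t)) (linf (fun i => ell t i - ellhat t i)).
Proof.
move=> th [wt0 ws] wtp T w T1 hw.
have pp : pos wt1 := wtp.
have s1 : sum1 wt1 := ws.
set K := fun k => KL w (wtil_aux theta wt1 ell k).
set h := fun t => hfun (linf (ell t)) (linf (fun i => ell t i - ellhat t i)).
have step_t t : (0 < t)%N ->
    theta * inner (ell t) (fun i => wpred theta wt1 ell ellhat t i - w i)
    <= K t.-1 - K t + theta ^+ 2 / 2 * h t.
  move=> t0; rewrite /K.
  have -> : wtil_aux theta wt1 ell t
      = normalize (expmul theta (wtil_aux theta wt1 ell t.-1) (ell t)).
    by case: t t0.
  have [hp hs] := wtil_aux_ok theta wt1 ell t.-1 pp s1.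
  rewrite /wpred /wtil.
  exact: step2.
have KT : 0 <= K T.
  have [hp hs] := wtil_aux_ok theta wt1 ell T pp s1.
  exact: KL_ge0.
have tel : \sum_(1 <= t < T.+1) (K t.-1 - K t) = K 0 - K T.
  rewrite big_add1 /=.
  have -> : \sum_(0 <= i < T) (K i - K i.+1) = - \sum_(0 <= i < T) (K i.+1 - K i).
    by rewrite -sumrN; apply: eq_bigr => i _; rewrite opprB.
  by rewrite telescope_sumr // opprB.
have main : theta * \sum_(1 <= t < T.+1)
     inner (ell t) (fun i => wpred theta wt1 ell ellhat t i - w i)
   <= K 0 - K T + theta ^+ 2 / 2 * \sum_(1 <= t < T.+1) h t.
  rewrite mulr_sumr mulr_sumr -tel -big_split /=.
  apply: ler_sum_nat => t /andP [t1 _].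
  exact: step_t.
have K0 : K 0 = KL w wt1 by [].
rewrite -(ler_pM2l th).
have -> : theta * (theta^-1 * KL w wt1 + theta / 2 * \sum_(1 <= t < T.+1) h t)
   = KL w wt1 + theta ^+ 2 / 2 * \sum_(1 <= t < T.+1) h t.
  by field; rewrite lt0r_neq0.
rewrite -K0; lra.
Qed.
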